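(* Let $0<\phi<\pi/6$, $\nu>0$. For $F,G\in\mathcal A_\phi$ and every integer $j\ge0$, $$|(p^jF)*G(p,t)|\le\frac{|p|^je^{\nu|p|}}{M_0(1+|p|^2)}\|F\|_\nu\|G\|_\nu\qquad\text{for all }(p,t)\in\overline{\mathcal S_\phi}\times[0,T].$$
   Context: $T>0$; $\mathcal S_\phi=\{p:\arg p\in(-\phi,\phi),0<|p|<\infty\}$, $\mathcal K=\overline{\mathcal S_\phi}\times[0,T]$; $\|G\|_\nu=M_0\sup_{(p,t)\in\mathcal K}(1+|p|^2)e^{-\nu|p|}|G(p,t)|$ with $M_0=\sup_{s\ge0}\frac{2(1+s^2)(\ln(1+s^2)+s\arctan s)}{s(s^2+4)}$. $\mathcal A_\phi$ is the space of functions $F(p,t)$ analytic in $p\in\mathcal S_\phi$, continuous on $\overline{\mathcal S_\phi}$ for each $t\in[0,T]$, with $\|F\|_\nu<\infty$. Convolution: $(F*G)(p,t)=\int_0^pF(s,t)G(p-s,t)\,ds$ along the segment $[0,p]$; $(p^jF)$ denotes the function $(p,t)\mapsto p^jF(p,t)$. *)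

(* Defs.v *)
From Stdlib Require Import Reals.
From Coquelicot Require Import Coquelicot.
Open Scope R_scope.

Definition open_sector (phi : R) (p : C) : Prop :=
  exists r theta : R, 0 < r /\ - phi < theta < phi /\
    p = (r * cos theta, r * sin theta)%R.

Definition closed_sector (phi : R) (p : C) : Prop :=
  exists r theta : R, 0 <= r /\ - phi <= theta <= phi /\
    p = (r * cos theta, r * sin theta)%R.

(* M_0 = sup_{s >= 0} 2(1+s^2)(ln(1+s^2) + s arctan s) / (s (s^2+4))
   (the expression is a 0/0 form at s = 0, so the sup is taken over s > 0,
   which gives the same supremum). *)
Definition M0 : R :=
  real (Lub_Rbar (fun y => exists s : R, 0 < s /\
    y = 2 * (1 + s ^ 2) * (ln (1 + s ^ 2) + s * atan s) / (s * (s ^ 2 + 4)))).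

Definition weighted_vals (T phi nu : R) (G : C -> R -> C) (y : R) : Prop :=
  exists (p : C) (t : R), closed_sector phi p /\ 0 <= t <= T /\
    y = (1 + Cmod p ^ 2) * exp (- nu * Cmod p) * Cmod (G p t).

Definition nu_norm (T phi nu : R) (G : C -> R -> C) : R :=
  M0 * real (Lub_Rbar (weighted_vals T phi nu G)).

Definition in_A (T phi nu : R) (F : C -> R -> C) : Prop :=
  (forall t, 0 <= t <= T ->
     (forall p, open_sector phi p ->
        @ex_derive C_AbsRing C_NormedModule (fun z => F z t) p) /\
     (forall p, closed_sector phi p ->
        filterlim (fun z => F z t) (within (closed_sector phi) (locally p))
                  (locally (F p t)))) /\
  is_finite (Lub_Rbar (weighted_vals T phi nu F)).

(* Convolution along the segment [0,p]:
   (F*G)(p,t) = int_0^p F(s,t) G(p-s,t) ds = int_0^1 F(tau p,t) G(p - tau p,t) p dtau *)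
Definition conv (F G : C -> R -> C) (p : C) (t : R) : C :=
  @RInt C_R_CompleteNormedModule
    (fun tau : R => (F (RtoC tau * p)%C t * G (p - RtoC tau * p)%C t * p)%C) 0 1.

Definition pmul (j : nat) (F : C -> R -> C) : C -> R -> C :=
  fun p t => (Cpow p j * F p t)%C.

(* Main.v *)
Require Import Defs.
From Stdlib Require Import Reals Lra.
From Coquelicot Require Import Coquelicot.
Open Scope R_scope.

Lemma cont_RtoC (r : R -> R) z :
  filterlim r (locally z) (locally (r z)) ->
  filterlim (fun x => RtoC (r x)) (locally z) (locally (RtoC (r z))).
Proof.
  intros Hr.
  assert (E : forall y, RtoC y = @scal R_AbsRing C_R_NormedModule y (RtoC 1)).
  { intros y. unfold scal; simpl. unfold prod_scal, RtoC; simpl.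
    unfold scal; simpl; unfold mult; simpl. f_equal; ring. }
  assert (H2 : filterlim (fun x => @scal R_AbsRing C_R_NormedModule (r x) (RtoC 1))
     (locally z) (locally (@scal R_AbsRing C_R_NormedModule (r z) (RtoC 1)))).
  { eapply (filterlim_comp _ _ _ r (fun y : R => @scal R_AbsRing C_R_NormedModule y (RtoC 1))). exact Hr.
    apply (@filterlim_scal_l R_AbsRing C_R_NormedModule). }
  rewrite <- (E (r z)) in H2.
  eapply filterlim_ext; [|exact H2]. intros x; simpl; symmetry; apply E.
Qed.

Lemma loc_C_abs (w : C) (P : C -> Prop) :
  @locally (AbsRing_UniformSpace C_AbsRing) w P -> @locally C_UniformSpace w P.
Proof.
  intros [e He].
  assert (Hs : 0 < sqrt 2) by (apply sqrt_lt_R0; lra).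
  assert (He2 : 0 < e / sqrt 2) by (apply Rdiv_lt_0_compat; [apply cond_pos | exact Hs]).
  exists (mkposreal _ He2). intros y Hy. apply He.
  pose proof (C_NormedModule_mixin_compat2 w y (mkposreal _ He2) Hy) as H.
  simpl in H. change (Cmod (minus y w) < e).
  replace (sqrt 2 * (e / sqrt 2)) with (pos e) in H by (field; lra). exact H.
Qed.

Lemma fl_C_abs {T} (F : (T -> Prop) -> Prop) (f : T -> C) w :
  filterlim f F (@locally C_UniformSpace w) ->
  filterlim f F (@locally (AbsRing_UniformSpace C_AbsRing) w).
Proof. intros H P HP. apply H. apply loc_C_abs. exact HP. Qed.

Lemma cont_Cmult (f g : R -> C) z :
  filterlim f (locally z) (locally (f z)) ->
  filterlim g (locally z) (locally (g z)) ->
  filterlim (fun x => (f x * g x)%C) (locally z) (locally (f z * g z)%C).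
Proof.
  intros Hf Hg.
  eapply filterlim_comp_2; [exact (fl_C_abs _ _ _ Hf) | exact Hg |].
  exact (@filterlim_scal C_AbsRing C_NormedModule (f z) (g z)).
Qed.

Lemma cont_Cpow (f : R -> C) z j :
  filterlim f (locally z) (locally (f z)) ->
  filterlim (fun x => Cpow (f x) j) (locally z) (locally (Cpow (f z) j)).
Proof.
  intros Hf. induction j as [|j IH]; simpl.
  - apply filterlim_const.
  - apply cont_Cmult; assumption.
Qed.

Lemma filterlim_within_of {T} {U : UniformSpace} (F : (T -> Prop) -> Prop) {FF : Filter F}
  (h : T -> U) (D : U -> Prop) y :
  filterlim h F (locally y) -> (forall x, D (h x)) -> filterlim h F (within D (locally y)).
Proof.
  intros H HD P HP. unfold within in HP.
  specialize (H _ HP). unfold filtermap in *.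
  eapply filter_imp; [|exact H]. intros x Hx. apply Hx, HD.
Qed.

Lemma sector_scale phi (p : C) (r : R) :
  closed_sector phi p -> 0 <= r -> closed_sector phi (RtoC r * p)%C.
Proof.
  intros [rr [th [Hr [Hth Hp]]]] H0.
  exists (r * rr), th. split; [apply Rmult_le_pos; lra|]. split; [lra|].
  subst p. unfold Cmult, RtoC; simpl. f_equal; ring.
Qed.

Lemma sub_scale (p : C) (x : R) : (p - RtoC x * p)%C = (RtoC (1 - x) * p)%C.
Proof. destruct p as [a b]. unfold Cminus, Cplus, Copp, Cmult, RtoC; simpl. f_equal; ring. Qed.

Definition clamp (x : R) : R := (Rabs x - Rabs (x - 1) + 1) / 2.

Lemma clamp_id x : 0 <= x <= 1 -> clamp x = x.
Proof. intros H. unfold clamp. rewrite Rabs_right by lra. rewrite Rabs_left1 by lra. field. Qed.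

Lemma clamp_bnd x : 0 <= clamp x <= 1.
Proof. unfold clamp. destruct (Rle_dec 0 x); destruct (Rle_dec 0 (x-1));
  repeat first [rewrite (Rabs_right x) by lra | rewrite (Rabs_left1 x) by lra |
                rewrite (Rabs_right (x-1)) by lra | rewrite (Rabs_left1 (x-1)) by lra]; lra.
Qed.

Lemma clamp_cont z : filterlim clamp (locally z) (locally (clamp z)).
Proof.
  apply continuity_pt_filterlim. unfold clamp.
  apply continuity_pt_div; [| apply continuity_pt_const; intros a b; reflexivity | lra].
  apply continuity_pt_plus; [| apply continuity_pt_const; intros a b; reflexivity].
  apply continuity_pt_minus.
  - apply (continuity_pt_comp id Rabs). apply derivable_continuous_pt, derivable_pt_id. apply Rcontinuity_abs.
  - apply (continuity_pt_comp (fun x => x - 1) Rabs).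
    apply continuity_pt_minus. apply derivable_continuous_pt, derivable_pt_id.
    apply continuity_pt_const; intros a b; reflexivity. apply Rcontinuity_abs.
Qed.

Lemma cont_comp_sector phi (Fz : C -> C) (r : R -> R) (p : C) z :
  closed_sector phi p -> (forall x, 0 <= r x) ->
  filterlim r (locally z) (locally (r z)) ->
  (forall q, closed_sector phi q ->
     filterlim Fz (within (closed_sector phi) (locally q)) (locally (Fz q))) ->
  filterlim (fun x => Fz (RtoC (r x) * p)%C) (locally z) (locally (Fz (RtoC (r z) * p)%C)).
Proof.
  intros Hp Hr0 Hr HF.
  apply (filterlim_comp _ _ _ (fun x => RtoC (r x) * p)%C Fz (locally z)
     (within (closed_sector phi) (locally (RtoC (r z) * p)%C)));
   [| apply HF; apply sector_scale; auto].
  apply (@filterlim_within_of R C_UniformSpace (locally z) _).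
  - apply (cont_Cmult (fun x => RtoC (r x)) (fun _ => p)).
    + apply cont_RtoC; exact Hr.
    + apply filterlim_const.
  - intros x; apply sector_scale; auto.
Qed.

Lemma integrand_RInt phi (F G : C -> R -> C) (p : C) t j :
  closed_sector phi p ->
  (forall q, closed_sector phi q ->
     filterlim (fun z => F z t) (within (closed_sector phi) (locally q)) (locally (F q t))) ->
  (forall q, closed_sector phi q ->
     filterlim (fun z => G z t) (within (closed_sector phi) (locally q)) (locally (G q t))) ->
  exists L, @is_RInt C_R_CompleteNormedModule
    (fun tau : R => (pmul j F (RtoC tau * p)%C t * G (p - RtoC tau * p)%C t * p)%C) 0 1 L.
Proof.
  intros Hp HF HG.
  set (f2 := fun tau : R => (pmul j F (RtoC (clamp tau) * p)%C t
            * G (RtoC (1 - clamp tau) * p)%C t * p)%C).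
  assert (Hc : forall z, @continuous R_UniformSpace C_R_CompleteNormedModule f2 z).
  { intros z.
    assert (H1 : filterlim (fun x => RtoC (clamp x) * p)%C (locally z) (locally (RtoC (clamp z) * p)%C)).
    { apply (cont_Cmult (fun x => RtoC (clamp x)) (fun _ => p)).
      apply cont_RtoC, clamp_cont. apply filterlim_const. }
    assert (H2 := cont_Cpow _ z j H1).
    assert (H3 := cont_comp_sector phi (fun z => F z t) clamp p z Hp (fun x => proj1 (clamp_bnd x)) (clamp_cont z) HF).
    assert (Hr : forall x, 0 <= 1 - clamp x) by (intros x; pose proof (clamp_bnd x); lra).
    assert (Hrc : filterlim (fun x => 1 - clamp x) (locally z) (locally (1 - clamp z))).
    { apply (proj1 (continuity_pt_filterlim (fun x => 1 - clamp x) z)). apply continuity_pt_minus.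
      apply continuity_pt_const; intros a b; reflexivity.
      apply (proj2 (continuity_pt_filterlim clamp z)), clamp_cont. }
    assert (H4 := cont_comp_sector phi (fun z => G z t) (fun x => 1 - clamp x) p z Hp Hr Hrc HG).
    assert (H5 := cont_Cmult _ _ z H2 H3). simpl in H5.
    assert (H6 := cont_Cmult _ _ z H5 H4). simpl in H6.
    assert (H7 := cont_Cmult _ (fun _ => p) z H6 (filterlim_const p)). simpl in H7.
    exact H7. }
  assert (Hex : @ex_RInt C_R_CompleteNormedModule f2 0 1).
  { apply ex_RInt_continuous. intros z _. apply Hc. }
  destruct Hex as [L HL]. exists L.
  eapply is_RInt_ext; [| exact HL].
  intros x Hx. rewrite Rmin_left in Hx by lra. rewrite Rmax_right in Hx by lra.
  unfold f2. rewrite clamp_id by lra. rewrite sub_scale. reflexivity.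
Qed.

Lemma CS_bound (a b x y : R) : a * a + b * b = 1 -> a * x + b * y <= sqrt (x * x + y * y).
Proof.
  intros Hab. destruct (Rle_dec (a * x + b * y) 0) as [H|H].
  - pose proof (sqrt_pos (x * x + y * y)). lra.
  - rewrite <- (sqrt_square (a * x + b * y)) by lra.
    apply sqrt_le_1_alt.
    assert (E : (x * x + y * y) = (a * x + b * y) * (a * x + b * y) + (a * y - b * x) * (a * y - b * x)).
    { transitivity ((a * a + b * b) * (x * x + y * y)). rewrite Hab; ring. ring. }
    rewrite E. pose proof (Rle_0_sqr (a * y - b * x)). unfold Rsqr in *. lra.
Qed.

Lemma Cmod_RInt_le (f : R -> C) (g : R -> R) (L : C) (Ig : R) :
  @is_RInt C_R_NormedModule f 0 1 L -> is_RInt g 0 1 Ig ->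
  (forall x, 0 <= x <= 1 -> Cmod (f x) <= g x) -> Cmod L <= Ig.
Proof.
  intros HL Hg Hb.
  assert (Ig0 : 0 <= Ig).
  { apply (is_RInt_ge_0 g 0 1); [lra | exact Hg |].
    intros x Hx. eapply Rle_trans; [apply Cmod_ge_0 | apply Hb; lra]. }
  destruct (Req_dec (Cmod L) 0) as [H0|H0]; [lra|].
  assert (Hm : 0 < Cmod L) by (pose proof (Cmod_ge_0 L); lra).
  set (a := fst L / Cmod L). set (b := snd L / Cmod L).
  assert (H1 := @is_RInt_fct_extend_fst R_NormedModule R_NormedModule f 0 1 L HL).
  assert (H2 := @is_RInt_fct_extend_snd R_NormedModule R_NormedModule f 0 1 L HL).
  assert (H3 := is_RInt_plus _ _ 0 1 _ _ (is_RInt_scal _ 0 1 a _ H1) (is_RInt_scal _ 0 1 b _ H2)).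
  assert (HmL : Cmod L * Cmod L = fst L * fst L + snd L * snd L).
  { unfold Cmod. rewrite sqrt_sqrt; [ring | nra]. }
  assert (Hab : a * a + b * b = 1).
  { unfold a, b.
    replace (fst L / Cmod L * (fst L / Cmod L) + snd L / Cmod L * (snd L / Cmod L))
      with ((fst L * fst L + snd L * snd L) / (Cmod L * Cmod L)) by (field; lra).
    rewrite <- HmL. field; lra. }
  assert (HE : plus (scal a (fst L)) (scal b (snd L)) = Cmod L).
  { change (a * fst L + b * snd L = Cmod L). unfold a, b.
    replace (fst L / Cmod L * fst L + snd L / Cmod L * snd L)
      with ((fst L * fst L + snd L * snd L) / Cmod L) by (field; lra).
    rewrite <- HmL. field; lra. }
  rewrite <- HE.
  apply (is_RInt_le _ _ 0 1 _ _ ltac:(lra) H3 Hg).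
  intros x Hx. eapply Rle_trans; [| apply Hb; lra].
  change (a * fst (f x) + b * snd (f x) <= Cmod (f x)).
  unfold Cmod.
  replace (fst (f x) ^ 2 + snd (f x) ^ 2) with (fst (f x) * fst (f x) + snd (f x) * snd (f x)) by ring.
  apply CS_bound; exact Hab.
Qed.

Definition Ef (s : R) : R :=
  2 * (1 + s ^ 2) * (ln (1 + s ^ 2) + s * atan s) / (s * (s ^ 2 + 4)).

Lemma ln1p_le (x : R) : 0 <= x -> ln (1 + x) <= x.
Proof.
  intros Hx. rewrite <- (ln_exp x) at 2. apply ln_le; [lra | apply exp_ineq1_le].
Qed.

Lemma Ef_le8 s : 0 < s -> Ef s <= 8.
Proof.
  intros Hs. unfold Ef.
  assert (Hl : ln (1 + s ^ 2) <= 2 * s).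
  { apply Rle_trans with (ln ((1 + s) * (1 + s))).
    apply ln_le; nra. rewrite ln_mult by lra. pose proof (ln1p_le s). lra. }
  assert (Ha : atan s <= 2) by (pose proof (atan_bound s); pose proof PI_4; lra).
  assert (Hln0 : 0 <= ln (1 + s ^ 2)).
  { rewrite <- ln_1. apply ln_le; nra. }
  assert (Hd : 0 < s * (s ^ 2 + 4)) by nra.
  apply Rle_trans with (2 * (1 + s ^ 2) * (4 * s) / (s * (s ^ 2 + 4))).
  - unfold Rdiv. apply Rmult_le_compat_r; [left; apply Rinv_0_lt_compat; lra|].
    apply Rmult_le_compat_l; [nra|]. nra.
  - apply (Rmult_le_reg_r (s * (s ^ 2 + 4))); [lra|].
    unfold Rdiv. rewrite Rmult_assoc, Rinv_l by lra. nra.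
Qed.

Lemma Ef_pos s : 0 < s -> 0 < Ef s.
Proof.
  intros Hs. unfold Ef.
  assert (Hln0 : 0 < ln (1 + s ^ 2)).
  { rewrite <- ln_1. apply ln_increasing; nra. }
  assert (Ha : 0 < atan s).
  { rewrite <- atan_0. apply atan_increasing; lra. }
  apply Rdiv_lt_0_compat; [|nra].
  apply Rmult_lt_0_compat; [nra|]. nra.
Qed.

Lemma M0_props : 0 < M0 /\ forall s, 0 < s -> Ef s <= M0.
Proof.
  unfold M0.
  set (S := fun y => exists s : R, 0 < s /\
    y = 2 * (1 + s ^ 2) * (ln (1 + s ^ 2) + s * atan s) / (s * (s ^ 2 + 4))).
  destruct (Lub_Rbar_correct S) as [Hub Hlub].
  assert (H8 : Rbar_le (Lub_Rbar S) 8).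
  { apply Hlub. intros y [s [Hs ->]]. simpl. apply (Ef_le8 s Hs). }
  assert (H1 : Rbar_le (Ef 1) (Lub_Rbar S)).
  { apply Hub. exists 1. split; [lra | reflexivity]. }
  assert (P1 := Ef_pos 1 ltac:(lra)).
  destruct (Lub_Rbar S) as [l | |]; simpl in *; try contradiction.
  split; [lra|].
  intros s Hs. apply (Hub (Ef s)). exists s; split; [exact Hs | reflexivity].
Qed.

Lemma int_g (s : R) : 0 < s ->
  is_RInt (fun tau => s / ((1 + (tau * s) ^ 2) * (1 + ((1 - tau) * s) ^ 2))) 0 1
    (Ef s / (1 + s ^ 2)).
Proof.
  intros Hs.
  set (A := 2 / (s * (s ^ 2 + 4))). set (B := 1 / (s ^ 2 + 4)).
  set (H := fun tau => A / 2 * ln (1 + (tau * s) ^ 2) + B * atan (tau * s)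
        - A / 2 * ln (1 + ((1 - tau) * s) ^ 2) - B * atan ((1 - tau) * s)).
  assert (Hd : forall x, is_derive H x
     (s / ((1 + (x * s) ^ 2) * (1 + ((1 - x) * s) ^ 2)))).
  { intros x. unfold H.
    assert (P1 : 0 < 1 + x * s * (x * s * 1)) by (rewrite Rmult_1_r; pose proof (Rle_0_sqr (x*s)); unfold Rsqr in *; lra).
    assert (P2 : 0 < 1 + (1 + - x) * s * ((1 + - x) * s * 1)) by (rewrite Rmult_1_r; pose proof (Rle_0_sqr ((1 + - x)*s)); unfold Rsqr in *; lra).
    assert (P3 : 0 < 1 + (x * s) ^ 2) by (pose proof (pow2_ge_0 (x*s)); lra).
    assert (P4 : 0 < 1 + ((1 - x) * s) ^ 2) by (pose proof (pow2_ge_0 ((1-x)*s)); lra).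
    auto_derive.
    - auto.
    - unfold A, B.
      field. repeat split; try lra. nra. }
  assert (Hi := is_RInt_derive H _ 0 1 (fun x _ => Hd x)).
  replace (Ef s / (1 + s ^ 2)) with (minus (H 1) (H 0)).
  - apply Hi. intros x _. apply (ex_derive_continuous (K := R_AbsRing) (V := R_NormedModule)).
    assert (P1 : 0 < 1 + x * s * (x * s * 1)) by (rewrite Rmult_1_r; pose proof (Rle_0_sqr (x*s)); unfold Rsqr in *; lra).
    assert (P2 : 0 < 1 + (1 + - x) * s * ((1 + - x) * s * 1)) by (rewrite Rmult_1_r; pose proof (Rle_0_sqr ((1 + - x)*s)); unfold Rsqr in *; lra).
    auto_derive. repeat split; try (apply Rgt_not_eq, Rmult_lt_0_compat; assumption).
  - change (H 1 - H 0 = Ef s / (1 + s ^ 2)). unfold H, Ef, A, B.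
    replace ((1 - 1) * s) with 0 by ring. replace ((1 - 0) * s) with s by ring.
    replace (1 * s) with s by ring. replace (0 * s) with 0 by ring. rewrite atan_0.
    replace (1 + 0 ^ 2) with 1 by ring. rewrite ln_1.
    field. split; nra.
Qed.

Lemma A_bound T phi nu (F : C -> R -> C) :
  is_finite (Lub_Rbar (weighted_vals T phi nu F)) ->
  forall q t, closed_sector phi q -> 0 <= t <= T ->
  0 <= real (Lub_Rbar (weighted_vals T phi nu F)) /\
  Cmod (F q t) <= real (Lub_Rbar (weighted_vals T phi nu F)) * exp (nu * Cmod q) / (1 + Cmod q ^ 2).
Proof.
  intros Hfin q t Hq Ht.
  destruct (Lub_Rbar_correct (weighted_vals T phi nu F)) as [Hub _].
  set (y := (1 + Cmod q ^ 2) * exp (- nu * Cmod q) * Cmod (F q t)).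
  assert (Hy : Rbar_le y (Lub_Rbar (weighted_vals T phi nu F))).
  { apply Hub. exists q, t. auto. }
  rewrite <- Hfin in Hy. simpl in Hy.
  set (n := real (Lub_Rbar (weighted_vals T phi nu F))) in *.
  assert (Hd : 0 < 1 + Cmod q ^ 2) by (pose proof (pow2_ge_0 (Cmod q)); lra).
  assert (He : 0 < exp (- nu * Cmod q)) by apply exp_pos.
  assert (Hc := Cmod_ge_0 (F q t)).
  assert (Hy0 : 0 <= y) by (unfold y; apply Rmult_le_pos; [apply Rmult_le_pos|]; lra).
  split; [lra|].
  assert (Hee : exp (- nu * Cmod q) * exp (nu * Cmod q) = 1).
  { rewrite <- exp_plus. replace (- nu * Cmod q + nu * Cmod q) with 0 by ring. apply exp_0. }
  replace (Cmod (F q t)) with (y * exp (nu * Cmod q) / (1 + Cmod q ^ 2)).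
  - unfold Rdiv. apply Rmult_le_compat_r; [left; apply Rinv_0_lt_compat; lra|].
    apply Rmult_le_compat_r; [left; apply exp_pos | exact Hy].
  - unfold y.
    transitivity (Cmod (F q t) * (exp (- nu * Cmod q) * exp (nu * Cmod q)) * ((1 + Cmod q ^ 2) / (1 + Cmod q ^ 2))).
    + field. lra.
    + rewrite Hee. field. lra.
Qed.

Theorem lemma11 (T phi nu : R) (F G : C -> R -> C) (j : nat) :
  0 < T -> 0 < phi < PI / 6 -> 0 < nu ->
  in_A T phi nu F -> in_A T phi nu G ->
  forall (p : C) (t : R), closed_sector phi p -> 0 <= t <= T ->
    Cmod (conv (pmul j F) G p t) <=
      Cmod p ^ j * exp (nu * Cmod p) / (M0 * (1 + Cmod p ^ 2))
        * nu_norm T phi nu F * nu_norm T phi nu G.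
Proof.
  intros HT Hphi Hnu [HFc HFfin] [HGc HGfin] p t Hp Ht.
  destruct (integrand_RInt phi F G p t j Hp (proj2 (HFc t Ht)) (proj2 (HGc t Ht))) as [L HL].
  assert (EL : conv (pmul j F) G p t = L) by (unfold conv; exact (@is_RInt_unique C_R_CompleteNormedModule _ 0 1 L HL)).
  rewrite EL.
  unfold nu_norm.
  set (nF := real (Lub_Rbar (weighted_vals T phi nu F))).
  set (nG := real (Lub_Rbar (weighted_vals T phi nu G))).
  assert (BF := A_bound T phi nu F HFfin). assert (BG := A_bound T phi nu G HGfin).
  fold nF in BF. fold nG in BG.
  assert (nF0 : 0 <= nF) by (apply (proj1 (BF p t Hp Ht))).
  assert (nG0 : 0 <= nG) by (apply (proj1 (BG p t Hp Ht))).
  destruct M0_props as [HM0 HM0ub].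
  set (s := Cmod p) in *.
  assert (s0 : 0 <= s) by apply Cmod_ge_0.
  assert (Hd : 0 < 1 + s ^ 2) by (pose proof (pow2_ge_0 s); lra).
  assert (Hsc : forall x, 0 <= x <= 1 -> closed_sector phi (RtoC x * p)%C)
    by (intros x Hx; apply sector_scale; [exact Hp | lra]).
  assert (Hxs : forall x, 0 <= x <= 1 -> Cmod (RtoC x * p)%C = x * s).
  { intros x Hx. rewrite Cmod_mult, Cmod_R, Rabs_right by lra. reflexivity. }
  destruct (Req_dec s 0) as [Hs0 | Hs0].
  -
    assert (HI := @is_RInt_const R_NormedModule 0 1 0).
    apply Rle_trans with (scal (1 - 0) (0 : R)).
    + apply (Cmod_RInt_le _ (fun _ => 0) L _ HL HI).
      intros x Hx. rewrite Cmod_mult. fold s. rewrite Hs0, Rmult_0_r. lra.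
    + change (scal (1 - 0) (0 : R)) with ((1 - 0) * 0). rewrite Rmult_0_r.
      apply Rmult_le_pos; [apply Rmult_le_pos|]; [| apply Rmult_le_pos; lra | apply Rmult_le_pos; lra].
      unfold Rdiv. apply Rmult_le_pos; [apply Rmult_le_pos; [apply pow_le; lra | left; apply exp_pos]|].
      left; apply Rinv_0_lt_compat, Rmult_lt_0_compat; lra.
  - assert (Hs : 0 < s) by lra.
    set (K := s ^ j * nF * nG * exp (nu * s)).
    assert (K0 : 0 <= K).
    { unfold K. apply Rmult_le_pos; [|left; apply exp_pos].
      apply Rmult_le_pos; [apply Rmult_le_pos; [apply pow_le|]|]; lra. }
    assert (HI := is_RInt_scal _ 0 1 K _ (int_g s Hs)).
    apply Rle_trans with (scal K (Ef s / (1 + s ^ 2))).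
    + apply (Cmod_RInt_le _ _ L _ HL HI).
      intros x Hx. change (scal K ?y) with (K * y).
      unfold pmul. rewrite !Cmod_mult, Cmod_pow. fold s.
      rewrite (Hxs x Hx).
      destruct (BF _ t (Hsc x Hx) Ht) as [_ HFb].
      destruct (BG _ t (Hsc (1 - x) ltac:(lra)) Ht) as [_ HGb].
      rewrite (Hxs x Hx) in HFb. rewrite (Hxs (1 - x)) in HGb by lra. rewrite <- sub_scale in HGb.
      assert (Hpw : (x * s) ^ j <= s ^ j).
      { apply pow_incr. split; [apply Rmult_le_pos; lra|]. nra. }
      assert (Hd1 : 0 < 1 + (x * s) ^ 2) by (pose proof (pow2_ge_0 (x * s)); lra).
      assert (Hd2 : 0 < 1 + ((1 - x) * s) ^ 2) by (pose proof (pow2_ge_0 ((1 - x) * s)); lra).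
      apply Rle_trans with (s ^ j * (nF * exp (nu * (x * s)) / (1 + (x * s) ^ 2))
             * (nG * exp (nu * ((1 - x) * s)) / (1 + ((1 - x) * s) ^ 2)) * s).
      * apply Rmult_le_compat_r; [lra|].
        apply Rmult_le_compat; [apply Rmult_le_pos; [apply pow_le; apply Rmult_le_pos; lra | apply Cmod_ge_0] | apply Cmod_ge_0 | | exact HGb].
        apply Rmult_le_compat; [apply pow_le; apply Rmult_le_pos; lra | apply Cmod_ge_0 | exact Hpw | exact HFb].
      * right. unfold K.
        assert (Hexp : exp (nu * s) = exp (nu * (x * s)) * exp (nu * ((1 - x) * s))).
        { rewrite <- exp_plus. f_equal. ring. }
        rewrite Hexp. field. lra.
    + change (scal K (Ef s / (1 + s ^ 2))) with (K * (Ef s / (1 + s ^ 2))).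
      apply Rle_trans with (K * (M0 / (1 + s ^ 2))).
      * apply Rmult_le_compat_l; [exact K0|]. unfold Rdiv.
        apply Rmult_le_compat_r; [left; apply Rinv_0_lt_compat; lra|]. apply HM0ub; exact Hs.
      * right. unfold K. field. lra.
Qed.
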